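(* Let $\mathbf{G}=(\mathbf{L},\mathbf{H})$ be a $2\times M$ partial-monitoring game with real matrices such that $\mathbf{L}=\mathbf{K}\mathbf{H}$ for some $\mathbf{K}\in\mathbb{R}^{2\times2}$. Then there exists a $2\times M$ bandit game $\mathbf{G}'=(\mathbf{L}',\mathbf{H}')$ (i.e. $\mathbf{L}'=\mathbf{H}'$) with $\mathbf{G}\le\mathbf{G}'$. If $\mathbf{K}=\begin{pmatrix}0&0\\1&1\end{pmatrix}$, then $\mathbf{G}'$ can be chosen with $\mathbf{G}\simeq\mathbf{G}'$.
   Context: A partial-monitoring game $\mathbf{G}=(\mathbf{L},\mathbf{H})$ has real $N\times M$ loss matrix $\mathbf{L}=(\ell_{ij})$ and feedback matrix $\mathbf{H}=(h_{ij})$ (here entries may be arbitrary reals); $\underline{n}=\{1,\dots,n\}$. Nature fixes an outcome sequence $J_1,J_2,\ldots\in\underline{M}$ in advance; at each time $t$ Learner chooses (possibly at random) $I_t\in\underline{N}$ based on internal randomization and past feedbacks $h_{I_s,J_s}$, $s<t$, then observes $h_{I_t,J_t}$ and suffers loss $\ell_{I_t,J_t}$; such a rule is a strategy $\mathcal{A}$. Regret $R_T(\mathcal{A},\mathbf{G})=\mathbb{E}\big[\sum_{t=1}^T\ell_{I_t,J_t}-\min_i\sum_{t=1}^T\ell_{i,J_t}\big]$. A bandit game is one with $\mathbf{H}=\mathbf{L}$. For two $N\times M$ games, $\mathbf{G}'\le\mathbf{G}$ means: for every algorithm $\mathcal{A}$ there is an algorithm $\mathcal{A}'$ such that, for every outcome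 sequence, $\mathcal{A}'$ on $\mathbf{G}'$ chooses the same action sequence as $\mathcal{A}$ on $\mathbf{G}$ and $R_T(\mathcal{A}',\mathbf{G}')\le R_T(\mathcal{A},\mathbf{G})$; $\mathbf{G}\simeq\mathbf{G}'$ means both $\mathbf{G}\le\mathbf{G}'$ and $\mathbf{G}'\le\mathbf{G}$. *)

(* Defs.v *)
From HB Require Import structures.
From mathcomp Require Import all_boot all_order all_algebra.
Set Implicit Arguments. Unset Strict Implicit. Unset Printing Implicit Defensive.
Import Order.TTheory GRing.Theory Num.Theory.
Local Open Scope ring_scope.

Section PM.
Variable R : realFieldType.
Variables N M : nat.

(* A (behavioural) randomized strategy: given the history of past
   (own action, observed feedback) pairs (oldest first), a probability
   distribution over the N actions. *)
Definition strategy := seq ('I_N * R) -> 'I_N -> R.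

Definition valid_strategy (A : strategy) : Prop :=
  (forall h i, 0 <= A h i) /\ (forall h, \sum_(i < N) A h i = 1).

(* Probability that, playing A on a game with feedback matrix H against the
   outcome sequence J (times 0,1,2,...), the first actions are exactly a,
   starting from history hist at time t. *)
Fixpoint path_prob (A : strategy) (H : 'M[R]_(N, M)) (J : nat -> 'I_M)
    (hist : seq ('I_N * R)) (t : nat) (a : seq 'I_N) : R :=
  match a with
  | [::] => 1
  | x :: a' => A hist x * path_prob A H J (rcons hist (x, H x (J t))) t.+1 a'
  end.

Definition act_prob A H J (a : seq 'I_N) : R := path_prob A H J [::] 0 a.

(* minimum of a function on 'I_N (0 if N = 0) *)
Definition fmin (f : 'I_N -> R) : R :=
  let s := [seq f i | i : 'I_N] in \big[Order.min/head 0 s]_(x <- s) x.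

Definition cumloss (L : 'M[R]_(N, M)) (J : nat -> 'I_M) (T : nat) (i : 'I_N) : R :=
  \sum_(t < T) L i (J t).

Definition regret (A : strategy) (L H : 'M[R]_(N, M)) (J : nat -> 'I_M) (T : nat) : R :=
  \sum_(a : T.-tuple 'I_N)
     act_prob A H J a * (\sum_(t < T) L (tnth a t) (J t) - fmin (cumloss L J T)).

Definition game_le (L1 H1 L2 H2 : 'M[R]_(N, M)) : Prop :=
  forall A, valid_strategy A ->
  exists A', valid_strategy A' /\
    forall (J : nat -> 'I_M) (T : nat),
      (forall a : T.-tuple 'I_N, act_prob A' H1 J a = act_prob A H2 J a) /\
      regret A' L1 H1 J T <= regret A L2 H2 J T.

Definition game_equiv (L1 H1 L2 H2 : 'M[R]_(N, M)) : Prop :=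
  game_le L1 H1 L2 H2 /\ game_le L2 H2 L1 H1.

End PM.

(* Main.v *)
Require Import Defs.
From HB Require Import structures.
From mathcomp Require Import all_boot all_order all_algebra.
From mathcomp Require Import ring.
Import Order.TTheory GRing.Theory Num.Theory.
Local Open Scope ring_scope.

Section Aux.
Variable R : realFieldType.

Lemma min_shift (x y C : R) : Order.min (x + C) (y + C) = Order.min x y + C.
Proof.
rewrite !minEle lerD2r; by case: ifP.
Qed.

Lemma big_min_shift (C idx : R) (s : seq R) :
  \big[Order.min/idx + C]_(x <- [seq y + C | y <- s]) x =
  \big[Order.min/idx]_(x <- s) x + C.
Proof.
elim: s => [|y s IH]; first by rewrite !big_nil.
by rewrite /= !big_cons IH min_shift.
Qed.

Lemma fmin_shift (g f : 'I_2 -> R) (C : R) :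
  (forall i, g i = f i + C) -> fmin g = fmin f + C.
Proof.
move=> hg; rewrite /fmin.
have -> : [seq g i | i : 'I_2] = [seq y + C | y <- [seq f i | i : 'I_2]].
  by rewrite -map_comp; apply: eq_map.
have -> : [seq f i | i : 'I_2] = f ord0 :: behead [seq f i | i : 'I_2].
  by rewrite /image_mem enum_ordSl.
by rewrite big_min_shift.
Qed.

Variable M : nat.

Definition simstrat (f : 'I_2 -> R -> R) (A : strategy R 2) : strategy R 2 :=
  fun h => A [seq (p.1, f p.1 p.2) | p <- h].

Lemma path_sim (f : 'I_2 -> R -> R) A (H1 H2 : 'M[R]_(2, M)) J :
  (forall x j, H2 x j = f x (H1 x j)) ->
  forall a hist t, path_prob (simstrat f A) H1 J hist t a =
    path_prob A H2 J [seq (p.1, f p.1 p.2) | p <- hist] t a.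
Proof.
move=> hH; elim=> [|x a IH] hist t //=.
by rewrite IH map_rcons /= -hH.
Qed.

Lemma game_le_sim (f : 'I_2 -> R -> R) (c : 'I_M -> R)
   (L1 H1 L2 H2 : 'M[R]_(2, M)) :
  (forall x j, H2 x j = f x (H1 x j)) ->
  (forall x j, L2 x j = L1 x j + c j) ->
  game_le L1 H1 L2 H2.
Proof.
move=> hH hL A [A0 A1]; exists (simstrat f A); split.
  by split=> [h i|h]; [apply: A0 | apply: A1].
move=> J T.
have hP : forall a : T.-tuple 'I_2,
    act_prob (simstrat f A) H1 J a = act_prob A H2 J a.
  by move=> a; rewrite /act_prob (path_sim f A H1 H2 J hH).
split=> //.
rewrite /regret le_eqVlt; apply/orP; left; apply/eqP.
apply: eq_bigr => a _; rewrite hP; congr (_ * _).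
rewrite (@fmin_shift (cumloss L2 J T) (cumloss L1 J T) (\sum_(t < T) c (J t))); last first.
  by move=> i; rewrite /cumloss -big_split /=; apply: eq_bigr => t _; rewrite ?hL.
have -> : \sum_(t < T) L2 (tnth a t) (J t) =
   \sum_(t < T) L1 (tnth a t) (J t) + \sum_(t < T) c (J t).
  by rewrite -big_split /=; apply: eq_bigr => t _; rewrite ?hL.
by rewrite opprD addrACA subrr addr0.
Qed.

End Aux.

Lemma ord2_cases (x : 'I_2) : x = ord0 \/ x = 1.
Proof.
case: x => [[|[|k]] hk]; [left|right|by []]; exact: val_inj.
Qed.


Theorem proposition2 (R : realFieldType) (M : nat) (L H : 'M[R]_(2, M))
    (K : 'M[R]_2) :
  L = K *m H ->
  (exists L' H' : 'M[R]_(2, M), L' = H' /\ game_le L H L' H') /\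
  (K = \matrix_(i < 2, j < 2) (if i == ord0 then 0 else 1) ->
   exists L' H' : 'M[R]_(2, M), L' = H' /\ game_equiv L H L' H').
Proof.
move=> hLK.
pose f (x : 'I_2) (v : R) :=
  if x == ord0 then (K ord0 ord0 - K 1 ord0) * v else (K 1 1 - K ord0 1) * v.
pose H' := \matrix_(i < 2, j < M) f i (H i j).
pose c (j : 'I_M) := - (K ord0 1 * H 1 j) - K 1 ord0 * H ord0 j.
have hH : forall x j, H' x j = f x (H x j) by move=> x j; rewrite mxE.
have hL : forall x j, H' x j = L x j + c j.
  move=> x j; rewrite mxE hLK mxE big_ord_recr big_ord_recr big_ord0 /= add0r /f /c.
  case: (ord2_cases x) => -> /=.
    have -> : (widen_ord (leqnSn 1) ord_max : 'I_2) = ord0 by apply: val_inj.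
    have -> : (ord_max : 'I_2) = 1 by apply: val_inj.
    ring.
  have -> : (widen_ord (leqnSn 1) ord_max : 'I_2) = ord0 by apply: val_inj.
  have -> : (ord_max : 'I_2) = 1 by apply: val_inj.
  ring.
split.
  by exists H', H'; split=> //; apply: game_le_sim hH hL.
move=> hK; exists H', H'; split=> //; split; first exact: game_le_sim hH hL.
pose g (x : 'I_2) (v : R) := if x == ord0 then - v else v.
apply: (@game_le_sim _ _ g (fun j => - c j)).
  move=> x j; rewrite hH /g /f hK !mxE /=.
  by case: (ord2_cases x) => -> /=; ring.
by move=> x j; rewrite hL; ring.
Qed.
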